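(* Consider the queueing system in the context under the MaxWeight policy with a diagonal matrix $\Delta$ with positive diagonal entries, in overload ($\rho\notin\mathcal{P}$). Then the vector $\eta=\lim_{t\to\infty}X(t)/t$ is the unique minimizer of $$\langle\eta,\Delta\eta\rangle=\min_{\eta'\in\Psi(\rho,\mathcal{S})}\langle\eta',\Delta\eta'\rangle,\qquad \Psi(\rho,\mathcal{S})=\Big\{(\rho-r)^+: r=\sum_{S\in\mathcal{S}}\alpha_SS,\ \alpha_S\ge0,\ \sum_{S\in\mathcal{S}}\alpha_S\le1\Big\}.$$
   Context: Model: $Q$ queues, finite set $\mathcal{S}=\{S_1,\dots,S_N\}\subset\mathbb{R}^Q_{\ge0}$ of service vectors, discrete time. Arrivals $A(t)$ with $0\le A_q(t)\le\bar A_q<\infty$ and $\rho_q=\lim_{t\to\infty}\frac1t\sum_{s=0}^{t-1}A_q(s)\in(0,\infty)$. Departures $D_q(t)=\min\{S_q(t),X_q(t)\}$, $X(t+1)=X(t)+A(t)-D(t)$, $X(0)=0$, with $S(t)\in\arg\max_{S\in\mathcal{S}}\langle S,\Delta X(t)\rangle$. $(x)^+$ is the componentwise positive part. Stability region $\mathcal{P}=\{r\in\mathbb{R}^Q_{\ge0}: r\le\sum_n\alpha_nS_n\text{ for some }\alpha_n\ge0,\sum_n\alpha_n=1\}$. (Under these assumptions the limit $\lim_t X(t)/t$ exists.) *)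

(* Defs.v *)
From HB Require Import structures.
From mathcomp Require Import all_boot all_order all_algebra.
From mathcomp Require Import all_classical all_reals topology normedtype sequences.
Set Implicit Arguments. Unset Strict Implicit. Unset Printing Implicit Defensive.
Import Order.TTheory GRing.Theory Num.Theory.
Import numFieldNormedType.Exports.
Local Open Scope ring_scope.
Local Open Scope classical_set_scope.

(* weighted inner product <u, Delta v> with Delta = diag(delta) *)
Definition dinner (R : realType) (Q : nat) (delta u v : 'I_Q -> R) : R :=
  \sum_(q < Q) u q * delta q * v q.

Definition pospart (R : realType) (Q : nat) (x : 'I_Q -> R) : 'I_Q -> R :=
  fun q => Num.max (x q) 0.

Definition combo (R : realType) (Q N : nat) (S : 'I_N -> 'I_Q -> R)
  (alpha : 'I_N -> R) : 'I_Q -> R :=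
  fun q => \sum_(n < N) alpha n * S n q.

Definition stab_region (R : realType) (Q N : nat) (S : 'I_N -> 'I_Q -> R)
  (r : 'I_Q -> R) : Prop :=
  (forall q, 0 <= r q) /\
  exists alpha : 'I_N -> R, (forall n, 0 <= alpha n) /\
    \sum_(n < N) alpha n = 1 /\ (forall q, r q <= combo S alpha q).

Definition Psi (R : realType) (Q N : nat) (rho : 'I_Q -> R)
  (S : 'I_N -> 'I_Q -> R) : set ('I_Q -> R) :=
  [set eta | exists alpha : 'I_N -> R, (forall n, 0 <= alpha n) /\
    \sum_(n < N) alpha n <= 1 /\
    eta = pospart (fun q => rho q - combo S alpha q)].

(* The MaxWeight queueing dynamics: arrivals A, schedule sched (index of the
   chosen service vector), queue lengths X. *)
Definition maxweight_system (R : realType) (Q N : nat)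
  (S : 'I_N -> 'I_Q -> R) (delta : 'I_Q -> R)
  (A : nat -> 'I_Q -> R) (sched : nat -> 'I_N) (X : nat -> 'I_Q -> R) : Prop :=
  (forall q, X 0%N q = 0) /\
  (forall t q, X t.+1 q = X t q + A t q - Num.min (S (sched t) q) (X t q)) /\
  (forall t n, dinner delta (S n) (X t) <= dinner delta (S (sched t)) (X t)).

(* Main.v *)
Require Import Defs.
From HB Require Import structures.
From mathcomp Require Import all_boot all_order all_algebra.
From mathcomp Require Import all_classical all_reals topology normedtype sequences derive.
From mathcomp Require Import lra ring.
Import Order.TTheory GRing.Theory Num.Theory.
Import numFieldNormedType.Exports.
Set Implicit Arguments. Unset Strict Implicit.
Local Open Scope ring_scope.
Local Open Scope classical_set_scope.

Section Opt.
Variables (R : realType) (Q N : nat) (S : 'I_N -> 'I_Q -> R) (delta rho : 'I_Q -> R).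
Hypothesis delta_gt0 : forall q, 0 < delta q.

Definition feas (alpha : 'I_N -> R) := (forall n, 0 <= alpha n) /\ \sum_(n < N) alpha n <= 1.
Definition etaof (alpha : 'I_N -> R) := pospart (fun q => rho q - combo S alpha q).
Definition fobj (alpha : 'I_N -> R) := dinner delta (etaof alpha) (etaof alpha).

Lemma maxE0 (x : R) : Num.max x 0 = if x < 0 then 0 else x.
Proof. by rewrite /Num.max /Order.max. Qed.

Lemma pw_ineq (u w l : R) : 0 <= l ->
  Num.max (u - l * w) 0 ^+ 2 <= Num.max u 0 ^+ 2 - 2 * l * w * Num.max u 0 + l ^+ 2 * w ^+ 2.
Proof.
move=> l0; rewrite !maxE0.
case: ifPn => h1; case: ifPn => h2; rewrite ?ltNge ?negbK in h1 h2; nra.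
Qed.

Lemma combo_lin a b l q : combo S (fun n => (1 - l) * a n + l * b n) q =
  combo S a q + l * (combo S b q - combo S a q).
Proof.
rewrite /combo.
have -> : \sum_(n < N) ((1 - l) * a n + l * b n) * S n q =
   (1 - l) * \sum_(n < N) a n * S n q + l * \sum_(n < N) b n * S n q.
  by rewrite !mulr_sumr -big_split /=; apply: eq_bigr => n _; ring.
ring.
Qed.

Lemma feas_comb a b l : feas a -> feas b -> 0 <= l <= 1 ->
  feas (fun n => (1 - l) * a n + l * b n).
Proof.
move=> [a0 a1] [b0 b1] /andP[l0 l1]; split.
  move=> n; apply: addr_ge0; apply: mulr_ge0 => //; lra.
rewrite big_split /= -!mulr_sumr.
have : (1 - l) * \sum_(n < N) a n <= 1 - l by apply: ler_piMr => //; lra.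
have : l * \sum_(n < N) b n <= l by apply: ler_piMr.
lra.
Qed.

Lemma variational a : feas a -> (forall b, feas b -> fobj a <= fobj b) ->
  forall b, feas b ->
  \sum_(q < Q) delta q * etaof a q * (combo S b q - combo S a q) <= 0.
Proof.
move=> fa amin b fb.
set x := \sum_(q < Q) _.
set M := \sum_(q < Q) delta q * (combo S b q - combo S a q) ^+ 2.
have M0 : 0 <= M by apply: sumr_ge0 => q _; apply: mulr_ge0; [exact: ltW| exact: sqr_ge0].
have key : forall l, 0 < l <= 1 -> 2 * x <= l * M.
  move=> l /andP[l0 l1].
  have := amin _ (feas_comb fa fb (introT andP (conj (ltW l0) l1))).
  rewrite /fobj /dinner.
  have : \sum_(q < Q) etaof (fun n => (1 - l) * a n + l * b n) q * delta q *
           etaof (fun n => (1 - l) * a n + l * b n) q <=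
         \sum_(q < Q) etaof a q * delta q * etaof a q - l * (2 * x) + l * (l * M).
    rewrite /x /M !mulr_sumr -!sumrB -big_split /=.
    apply: ler_sum => q _.
    rewrite /etaof /pospart combo_lin.
    set u := rho q - combo S a q; set w := combo S b q - combo S a q.
    have -> : rho q - (combo S a q + l * w) = u - l * w by rewrite /u; ring.
    have := pw_ineq u w (ltW l0).
    have d0 := delta_gt0 q.
    move=> h.
    have : delta q * Num.max (u - l * w) 0 ^+ 2 <=
           delta q * (Num.max u 0 ^+ 2 - 2 * l * w * Num.max u 0 + l ^+ 2 * w ^+ 2).
      by apply: ler_wpM2l => //; exact: ltW.
    rewrite !expr2 => h2.
    have -> : Num.max (u - l * w) 0 * delta q * Num.max (u - l * w) 0 =
       delta q * (Num.max (u - l * w) 0 * Num.max (u - l * w) 0) by ring.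
    apply: (le_trans h2) => /=. rewrite le_eqVlt; apply/orP; left; apply/eqP; ring.
  move=> h1 h2.
  have : 0 <= l * (l * M - 2 * x) by lra.
  by rewrite pmulr_rge0 // subr_ge0.
rewrite leNgt; apply/negP => x0.
have lp : 0 < x / (M + x) <= 1.
  rewrite divr_gt0 //=; last by lra.
  by rewrite ler_pdivrMr; lra.
have := key _ lp.
rewrite mulrAC ler_pdivlMr; last by lra.
nra.
Qed.

Lemma unique_min a : feas a -> (forall b, feas b -> fobj a <= fobj b) ->
  forall b, feas b -> fobj b = fobj a -> etaof b = etaof a.
Proof.
move=> fa amin b fb fe.
have h := amin _ (feas_comb fa fb (l := 1/2) ltac:(apply/andP; split; lra)).
set c := (fun n => _) in h.
have hc : fobj c <= fobj a - (\sum_(q < Q) delta q * (etaof b q - etaof a q) ^+ 2) / 4.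
  have -> : fobj a = (fobj a + fobj b) / 2 by rewrite fe; field.
  rewrite /fobj /dinner -!big_split /= !mulr_suml -sumrB.
  apply: ler_sum => q _.
  have d0 := delta_gt0 q.
  rewrite /etaof /pospart combo_lin.
  set ka := combo S a q; set kb := combo S b q.
  have e1 : 0 <= Num.max (rho q - (ka + 1 / 2 * (kb - ka))) 0 by rewrite le_max lexx orbT.
  have e2 : Num.max (rho q - (ka + 1 / 2 * (kb - ka))) 0 <=
     (Num.max (rho q - ka) 0 + Num.max (rho q - kb) 0) / 2.
    rewrite ge_max; apply/andP; split; last first.
      apply: divr_ge0 => //; apply: addr_ge0; rewrite le_max lexx orbT //.
    have : rho q - ka <= Num.max (rho q - ka) 0 by rewrite le_max lexx.
    have : rho q - kb <= Num.max (rho q - kb) 0 by rewrite le_max lexx.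
    lra.
  set m := Num.max (rho q - (ka + _)) 0 in e1 e2 *.
  set ua := Num.max (rho q - ka) 0 in e2 *; set ub := Num.max (rho q - kb) 0 in e2 *.
  have : m * m <= (ua + ub) / 2 * ((ua + ub) / 2) by apply: ler_pM.
  move=> h3.
  have : delta q * (m * m) <= delta q * ((ua + ub) / 2 * ((ua + ub) / 2)).
    by apply: ler_wpM2l => //; exact: ltW.
  move=> h4.
  have -> : m * delta q * m = delta q * (m * m) by ring.
  by apply: (le_trans h4); rewrite le_eqVlt; apply/orP; left; apply/eqP; rewrite !expr2; field.
have hs : \sum_(q < Q) delta q * (etaof b q - etaof a q) ^+ 2 <= 0 by lra.
have hge : forall i : 'I_Q, true -> 0 <= delta i * (etaof b i - etaof a i) ^+ 2.
  by move=> i _; apply: mulr_ge0; [exact: ltW|exact: sqr_ge0].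
have h0 : \sum_(q < Q) delta q * (etaof b q - etaof a q) ^+ 2 = 0.
  by apply: le_anti; rewrite hs /=; exact: sumr_ge0.
have := psumr_eq0P hge h0.
move=> hz; apply/funext => q; have /eqP := hz q isT.
by rewrite mulf_eq0 gt_eqF //= sqrf_eq0 subr_eq0 => /eqP.
Qed.

Lemma sum_cont (n : nat) (T : topologicalType) (F : 'I_n -> T -> R^o) :
  (forall i, continuous (F i)) -> continuous (fun x => \sum_(i < n) F i x).
Proof.
move=> Fc; apply: continuous_big => //.
exact: add_continuous.
Qed.

Lemma contM (T : topologicalType) (f g : T -> R^o) :
  continuous f -> continuous g -> continuous (fun x => f x * g x).
Proof. by move=> hf hg x; apply: continuousM; [exact: hf|exact: hg]. Qed.
Lemma contB (T : topologicalType) (f g : T -> R^o) :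
  continuous f -> continuous g -> continuous (fun x => f x - g x).
Proof. by move=> hf hg x; apply: continuousB; [exact: hf|exact: hg]. Qed.
Lemma contmax (T : topologicalType) (f g : T -> R^o) :
  continuous f -> continuous g -> continuous (fun x => Num.max (f x) (g x)).
Proof. by move=> hf hg x; apply: continuous_max; [exact: hf|exact: hg]. Qed.

Lemma exists_min : exists2 a, feas a & forall b, feas b -> fobj a <= fobj b.
Proof.
pose K := [set v : 'rV[R]_N | forall i, `[0, 1] (v ord0 i)] `&`
          [set v : 'rV[R]_N | \sum_(i < N) v ord0 i <= 1].
pose g (v : 'rV[R]_N) := fobj (fun i => v ord0 i).
have K0 : K !=set0.
  exists 0; split => [i|] /=; first by rewrite mxE in_itv /= lexx ler01.
  by rewrite big1 ?ler01 // => i _; rewrite mxE.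
have Kc : compact K.
  have c1 : compact [set v : 'rV[R]_N | forall i, `[0, 1] (v ord0 i)].
    exact: (@rV_compact R N (fun=> `[0, 1]%classic) (fun=> @segment_compact R 0 1)).
  have c2 : closed [set v : 'rV[R]_N | \sum_(i < N) v ord0 i <= 1].
    apply: (@preimage_closed _ R^o (fun v : 'rV[R]_N => \sum_(i < N) v ord0 i) [set x | x <= 1]).
      move=> v _; exact: (@sum_cont N _ (fun i (v : 'rV[R]_N) => v ord0 i) (fun i => @coord_continuous R 1 N ord0 i)).
    exact: closed_le.
  exact: (compact_closedI c1 c2).
have gc : continuous g.
  rewrite /g /fobj /dinner /etaof /pospart /combo.
  apply: sum_cont => q.
  have hp : continuous (fun v : 'rV[R]_N => Num.max (rho q - \sum_(n < N) v ord0 n * S n q) 0 : R^o).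
    apply: contmax; last exact: cst_continuous.
    apply: contB; first exact: cst_continuous.
    apply: sum_cont => n; apply: contM; [exact: coord_continuous| exact: cst_continuous].
  by apply: contM => //; apply: contM => //; exact: cst_continuous.
have [c cK cmin] := compact_EVT_min K0 Kc (continuous_subspaceT gc).
rewrite inE in cK; case: cK => cK1 cK2.
exists (fun i => c ord0 i).
  split => // n; by move: (cK1 n); rewrite /= in_itv /= => /andP[].
move=> b [b0 b1].
have -> : fobj b = g (\row_i b i) by rewrite /g; congr fobj; apply/funext => i; rewrite mxE.
apply: cmin; rewrite inE; split => /=.
  move=> i; rewrite mxE in_itv /= b0 /=.
  apply: le_trans b1; rewrite (bigD1 i) //= lerDl; exact: sumr_ge0.
by under eq_bigr do rewrite mxE.
Qed.
End Opt.

Lemma sum_tail (R : realType) (e : nat -> R) (th : R) (T : nat) : 0 <= th ->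
  (forall s, (T <= s)%N -> `|e s| <= th * s%:R) ->
  forall t, (T <= t)%N ->
  \sum_(s < t) `|e s.+1| <= \sum_(s < T) `|e s.+1| + th * t%:R ^+ 2.
Proof.
move=> th0 he t Ht; rewrite -(subnKC Ht); elim: (t - T)%N => [|m IH].
  rewrite addn0 lerDl; apply: mulr_ge0 => //; exact: sqr_ge0.
rewrite addnS big_ord_recr /=.
have h := he (T + m).+1 (leq_trans (leq_addr m T) (leqnSn _)).
have hn : ((T + m).+1)%:R = (T + m)%:R + 1 :> R by rewrite -addn1 natrD.
rewrite hn in h *.
have n0 : 0 <= (T + m)%:R :> R by exact: ler0n.
move: IH h; set n := (T + m)%:R; nra.
Qed.

Section Dyn.
Variables (R : realType) (Q N : nat) (S : 'I_N -> 'I_Q -> R) (delta : 'I_Q -> R)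
  (A : nat -> 'I_Q -> R) (Abar : 'I_Q -> R) (rho : 'I_Q -> R)
  (sched : nat -> 'I_N) (X : nat -> 'I_Q -> R) (a : 'I_N -> R).
Hypothesis S0 : forall n q, 0 <= S n q.
Hypothesis d0 : forall q, 0 < delta q.
Hypothesis A0 : forall t q, 0 <= A t q <= Abar q.
Hypothesis sys : maxweight_system S delta A sched X.
Hypothesis fa : feas a.
Hypothesis amin : forall b, feas b -> fobj S delta rho a <= fobj S delta rho b.

Let eta := etaof S rho a.
Let k := combo S a.
Let D t q := Num.min (S (sched t) q) (X t q).
Let Y t q := X t q - t%:R * eta q.
Let Z t q := A t q - D t q - eta q.
Let V t := \sum_(q < Q) delta q * Y t q ^+ 2.
Let Smax q := \sum_(n < N) S n q.
Let L q := Abar q + Smax q + eta q.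
Let B := \sum_(q < Q) delta q * Smax q ^+ 2.

Lemma eta_ge0 q : 0 <= eta q.
Proof. by rewrite /eta /etaof /pospart le_max lexx orbT. Qed.

Lemma X_ge0 t q : 0 <= X t q.
Proof.
case: sys => [h0 [hs _]]; elim: t => [|t IH]; first by rewrite h0.
rewrite hs; have := A0 t q; have : Num.min (S (sched t) q) (X t q) <= X t q by rewrite ge_min lexx orbT.
lra.
Qed.

Lemma S_le_Smax n q : S n q <= Smax q.
Proof. by rewrite /Smax (bigD1 n) //= lerDl; apply: sumr_ge0. Qed.

Lemma D_bounds t q : 0 <= D t q <= S (sched t) q.
Proof.
rewrite /D le_min S0 X_ge0 /= ge_min lexx //.
Qed.

Lemma Z_bounds t q : - L q <= Z t q <= L q.
Proof.
have := D_bounds t q; have := A0 t q; have := eta_ge0 q; have := S_le_Smax (sched t) q.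
rewrite /Z /L; lra.
Qed.

Lemma Y_step t q : Y t.+1 q = Y t q + Z t q.
Proof.
case: sys => [_ [hs _]]; rewrite /Y /Z hs -/(D t q) -addn1 natrD; ring.
Qed.

Lemma drift t : \sum_(q < Q) delta q * Y t q * (rho q - eta q - D t q) <= B.
Proof.
set G := dinner delta (S (sched t)) (X t).
have G0 : 0 <= G.
  by apply: sumr_ge0 => q _; apply: mulr_ge0; [apply: mulr_ge0 => //; exact: ltW| exact: X_ge0].
have r_le_k q : rho q - eta q <= k q.
  have : rho q - k q <= eta q by rewrite /eta /etaof /pospart le_max lexx.
  lra.
have eta_r q : eta q * (rho q - eta q) = eta q * k q.
  rewrite /eta /etaof /pospart maxE0 -/(k q); case: ifP => _; ring.
have h1 : \sum_(q < Q) delta q * X t q * (rho q - eta q) <= G.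
  apply: (@le_trans _ _ (\sum_(q < Q) delta q * X t q * k q)).
    apply: ler_sum => q _; apply: ler_wpM2l; last exact: r_le_k.
    by apply: mulr_ge0; [exact: ltW|exact: X_ge0].
  have -> : \sum_(q < Q) delta q * X t q * k q =
            \sum_(n < N) a n * dinner delta (S n) (X t).
    rewrite /k /combo.
    under eq_bigr do rewrite mulr_sumr.
    rewrite exchange_big; apply: eq_bigr => n _; rewrite /dinner mulr_sumr.
    by apply: eq_bigr => q _; ring.
  case: fa => a0 a1.
  apply: (@le_trans _ _ (\sum_(n < N) a n * G)).
    apply: ler_sum => n _; apply: ler_wpM2l => //.
    by case: sys => [_ [_ hm]]; exact: hm.
  rewrite -mulr_suml.
  have : 0 <= G * (1 - \sum_(n < N) a n) by apply: mulr_ge0 => //; rewrite subr_ge0.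
  nra.
have h2 : \sum_(q < Q) delta q * X t q * (S (sched t) q - D t q) <= B.
  apply: ler_sum => q _.
  have dq := d0 q; have Xq := X_ge0 t q; have Sq := S_le_Smax (sched t) q; have S0q := S0 (sched t) q.
  rewrite /D /Num.min /Order.min; case: ifPn => h.
    rewrite subrr mulr0; apply: mulr_ge0; [exact: ltW|exact: sqr_ge0].
  rewrite -leNgt in h.
  have : X t q * (S (sched t) q - X t q) <= Smax q ^+ 2 by nra.
  move=> h'; rewrite -mulrA; apply: ler_wpM2l => //; exact: ltW.
have h3 : 0 <= \sum_(q < Q) delta q * eta q * (rho q - eta q - D t q).
  pose b := fun n : 'I_N => ((n == sched t)%:R : R).
  have fb : feas b.
    split => [n|]; first by rewrite /b ler0n.
    rewrite (bigD1 (sched t)) //= /b eqxx big1 ?addr0 // => n /negbTE -> //.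
  have cb q : combo S b q = S (sched t) q.
    rewrite /combo (bigD1 (sched t)) //= /b eqxx big1 ?addr0 ?mul1r // => n /negbTE ->.
    by rewrite mul0r.
  have := variational d0 fa amin fb.
  under eq_bigr do rewrite cb.
  move=> hv.
  have : \sum_(q < Q) delta q * eta q * (S (sched t) q - D t q) >= 0.
    apply: sumr_ge0 => q _; apply: mulr_ge0.
      by apply: mulr_ge0; [exact: ltW| exact: eta_ge0].
    by have := D_bounds t q; rewrite subr_ge0 => /andP[].
  have -> : \sum_(q < Q) delta q * eta q * (rho q - eta q - D t q) =
    - \sum_(q < Q) delta q * etaof S rho a q * (S (sched t) q - combo S a q) +
      \sum_(q < Q) delta q * eta q * (S (sched t) q - D t q).
    rewrite -sumrN -big_split /=; apply: eq_bigr => q _.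
    rewrite -/eta -/(k q).
    have := eta_r q; move=> e.
    have -> : delta q * eta q * (rho q - eta q - D t q) =
       delta q * (eta q * (rho q - eta q)) - delta q * eta q * D t q by ring.
    rewrite e; ring.
  lra.
have E : \sum_(q < Q) delta q * Y t q * (rho q - eta q - D t q) =
   \sum_(q < Q) delta q * X t q * (rho q - eta q) - G +
   \sum_(q < Q) delta q * X t q * (S (sched t) q - D t q) -
   t%:R * \sum_(q < Q) delta q * eta q * (rho q - eta q - D t q).
  rewrite /G /dinner mulr_sumr -sumrB -big_split -sumrB /=.
  by apply: eq_bigr => q _; rewrite /Y; ring.
rewrite E.
have : 0 <= t%:R * \sum_(q < Q) delta q * eta q * (rho q - eta q - D t q).
  by apply: mulr_ge0.
lra.
Qed.

Let C := 2 * B + \sum_(q < Q) delta q * L q ^+ 2.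
Let W t q := \sum_(s < t) Y s q * (A s q - rho q).
Let E t q := \sum_(s < t) A s q - t%:R * rho q.

Lemma V_step t : V t.+1 <= V t + 2 * \sum_(q < Q) delta q * Y t q * (A t q - rho q) + C.
Proof.
have e : V t.+1 = V t + 2 * \sum_(q < Q) delta q * Y t q * (A t q - rho q) +
   2 * \sum_(q < Q) delta q * Y t q * (rho q - eta q - D t q) +
   \sum_(q < Q) delta q * Z t q ^+ 2.
  rewrite /V !mulr_sumr -!big_split /=; apply: eq_bigr => q _.
  rewrite Y_step /Z; ring.
rewrite e /C.
have := drift t.
have : \sum_(q < Q) delta q * Z t q ^+ 2 <= \sum_(q < Q) delta q * L q ^+ 2.
  apply: ler_sum => q _; apply: ler_wpM2l; first exact: ltW.
  have := Z_bounds t q; move=> /andP[h1 h2].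
  have : 0 <= L q by lra.
  nra.
lra.
Qed.

Lemma V_bound t : V t <= 2 * \sum_(q < Q) delta q * W t q + t%:R * C.
Proof.
elim: t => [|t IH].
  rewrite /V /W big1 ?mul0r ?addr0.
    by rewrite big1 ?mulr0 // => q _; rewrite big_ord0 mulr0.
  by move=> q _; rewrite /Y; case: sys => [h0 _]; rewrite h0 mul0r subr0 expr2 mulr0 mulr0.
have eW : \sum_(q < Q) delta q * W t.+1 q =
   \sum_(q < Q) delta q * W t q + \sum_(q < Q) delta q * Y t q * (A t q - rho q).
  rewrite -big_split /=; apply: eq_bigr => q _; rewrite /W big_ord_recr /=; ring.
rewrite eW; have -> : (t.+1)%:R = t%:R + 1 :> R by rewrite -addn1 natrD.
have := V_step t.
lra.
Qed.

Lemma abel t q : W t q = Y t q * E t q - \sum_(s < t) Z s q * E s.+1 q.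
Proof.
elim: t => [|t IH].
  by rewrite /W /E /Y !big_ord0 !mul0r !subr0 mulr0.
rewrite /W big_ord_recr /= -/(W t q) IH [in RHS]big_ord_recr /= Y_step.
have -> : E t.+1 q = E t q + A t q - rho q.
  by rewrite /E big_ord_recr /= -addn1 natrD; ring.
ring.
Qed.

Lemma Y_bound t q : - (t%:R * L q) <= Y t q <= t%:R * L q.
Proof.
elim: t => [|t IH].
  by rewrite /Y; case: sys => [h0 _]; rewrite h0 !mul0r subrr oppr0 lexx.
rewrite Y_step -addn1 natrD mulrDl mul1r.
have := Z_bounds t q; move: IH; lra.
Qed.

Lemma W_bound (th : R) (T : nat) q : 0 <= th ->
  (forall s, (T <= s)%N -> `|E s q| <= th * s%:R) ->
  forall t, (T <= t)%N ->
  `|W t q| <= 2 * L q * th * t%:R ^+ 2 + L q * \sum_(s < T) `|E s.+1 q|.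
Proof.
move=> th0 hE t Ht.
have hs := sum_tail th0 hE Ht.
have L0 : 0 <= L q by have := Z_bounds 0 q; lra.
rewrite abel.
apply: (le_trans (ler_normB _ _)).
have h1 : `|Y t q * E t q| <= t%:R * L q * (th * t%:R).
  rewrite normrM; apply: ler_pM => //.
    by have := Y_bound t q; rewrite ler_norml.
  exact: hE.
have h2 : `|\sum_(s < t) Z s q * E s.+1 q| <= L q * \sum_(s < t) `|E s.+1 q|.
  apply: (le_trans (ler_norm_sum _ _ _)); rewrite mulr_sumr; apply: ler_sum => s _.
  rewrite normrM; apply: ler_wpM2r => //.
  by have := Z_bounds s q; rewrite ler_norml.
have : L q * \sum_(s < t) `|E s.+1 q| <= L q * (\sum_(s < T) `|E s.+1 q| + th * t%:R ^+ 2).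
  exact: ler_wpM2l.
move: h1 h2; rewrite !expr2; nra.
Qed.

Lemma conv (Ahyp : forall q, (fun t : nat => (t%:R)^-1 * \sum_(s < t) A s q) @ \oo --> rho q)
  q0 : (fun t : nat => X t q0 / t%:R) @ \oo --> eta q0.
Proof.
apply/cvgrPdist_le => eps eps0.
have L0 q : 0 <= L q by have := Z_bounds 0 q; lra.
set P1 := 4 * \sum_(q < Q) delta q * L q.
have P10 : 0 <= P1.
  by apply: mulr_ge0 => //; apply: sumr_ge0 => q _; apply: mulr_ge0 => //; exact: ltW.
set th := delta q0 * eps ^+ 2 / (P1 + 2).
have th0 : 0 < th.
  by apply: divr_gt0; [apply: mulr_gt0 => //; exact: exprn_gt0| lra].
have ev : \forall t \near \oo, forall q, `|rho q - (t%:R)^-1 * \sum_(s < t) A s q| <= th.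
  apply: filter_forall => q.
  by move/cvgrPdist_le : (Ahyp q) => /(_ th th0).
case: ev => T _ HT.
have hE q : forall s, (T.+1 <= s)%N -> `|E s q| <= th * s%:R.
  move=> s Hs.
  have s0 : 0 < s%:R :> R by rewrite ltr0n; apply: leq_trans Hs.
  have -> : E s q = - (s%:R * (rho q - (s%:R)^-1 * \sum_(u < s) A u q)).
    by rewrite /E; field; rewrite gt_eqF.
  rewrite normrN normrM ger0_norm ?(ltW s0) // mulrC.
  apply: ler_wpM2r; first exact: ltW.
  apply: HT => /=; exact: ltnW.
set K := fun q => \sum_(s < T.+1) `|E s.+1 q|.
set P2 := 2 * \sum_(q < Q) delta q * (L q * K q).
have C0 : 0 <= C.
  rewrite /C; apply: addr_ge0.
    apply: mulr_ge0 => //; apply: sumr_ge0 => q _; apply: mulr_ge0; [exact: ltW|exact: sqr_ge0].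
  apply: sumr_ge0 => q _; apply: mulr_ge0; [exact: ltW|exact: sqr_ge0].
have P20 : 0 <= P2.
  apply: mulr_ge0 => //; apply: sumr_ge0 => q _; apply: mulr_ge0; first exact: ltW.
  by apply: mulr_ge0 => //; apply: sumr_ge0.
pose T2 := (T.+1 + Num.bound (P2 / th) + Num.bound (C / th))%N.
exists T2 => // t /= Ht.
have HtT : (T.+1 <= t)%N by apply: leq_trans (Ht); rewrite /T2 -addnA leq_addr.
have t1 : 1 <= t%:R :> R by rewrite ler1n; apply: leq_trans HtT.
have hP2 : P2 <= th * t%:R.
  rewrite -(ler_pdivrMl _ _ th0) mulrC.
  have hb : P2 / th < (Num.bound (P2 / th))%:R.
    by apply: archi_boundP; apply: divr_ge0 => //; exact: ltW.
  apply: (le_trans (ltW hb)); rewrite ler_nat; apply: leq_trans (Ht).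
  by rewrite /T2 -addnA addnC -addnA leq_addr.
have hC : C <= th * t%:R.
  rewrite -(ler_pdivrMl _ _ th0) mulrC.
  have hb : C / th < (Num.bound (C / th))%:R.
    by apply: archi_boundP; apply: divr_ge0 => //; exact: ltW.
  apply: (le_trans (ltW hb)); rewrite ler_nat; apply: leq_trans (Ht).
  by rewrite /T2 leq_addl.
have hV : V t <= th * (P1 + 2) * t%:R ^+ 2.
  apply: (le_trans (V_bound t)).
  have hW : \sum_(q < Q) delta q * W t q <=
            \sum_(q < Q) delta q * (2 * L q * th * t%:R ^+ 2 + L q * K q).
    apply: ler_sum => q _; apply: ler_wpM2l; first exact: ltW.
    apply: le_trans (W_bound (ltW th0) (hE q) HtT); exact: ler_norm.
  have e2 : \sum_(q < Q) delta q * (2 * L q * th * t%:R ^+ 2 + L q * K q) =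
     th * t%:R ^+ 2 * (P1 / 2) + P2 / 2.
    rewrite /P1 /P2 !mulr_sumr !mulr_suml !mulr_sumr -big_split /=.
    by apply: eq_bigr => q _; field.
  rewrite e2 in hW.
  have : t%:R * C <= th * t%:R ^+ 2.
    have h0 : t%:R * C <= t%:R * (th * t%:R).
      by apply: ler_wpM2l; [exact: ler0n|exact: hC].
    by apply: (le_trans h0); rewrite le_eqVlt; apply/orP; left; apply/eqP; ring.
  have : P2 <= th * t%:R ^+ 2.
    apply: (le_trans hP2); rewrite expr2 mulrA ler_peMr //.
    by apply: mulr_ge0; [exact: ltW| exact: ler0n].
  move: hW; nra.
have hY : delta q0 * Y t q0 ^+ 2 <= V t.
  rewrite /V (bigD1 q0) //= lerDl; apply: sumr_ge0 => q _.
  apply: mulr_ge0; [exact: ltW|exact: sqr_ge0].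
have hY2 : Y t q0 ^+ 2 <= (eps * t%:R) ^+ 2.
  have e1 : th * (P1 + 2) = delta q0 * eps ^+ 2 by rewrite /th; field; lra.
  rewrite e1 in hV.
  have := le_trans hY hV.
  rewrite exprMn -mulrA ler_pM2l //.
have hY3 : `|Y t q0| <= eps * t%:R.
  rewrite -ler_sqr ?nnegrE ?normr_ge0 //; last by apply: mulr_ge0; [exact: ltW| exact: ler0n].
  by rewrite real_normK // num_real.
have -> : eta q0 - X t q0 / t%:R = - (Y t q0 / t%:R).
  by rewrite /Y; field; rewrite gt_eqF //; lra.
rewrite normrN normrM normfV normr_nat ler_pdivrMr; lra.
Qed.

End Dyn.

Unset Implicit Arguments.
Theorem proposition2 (R : realType) (Q N : nat)
  (S : 'I_N -> 'I_Q -> R) (delta : 'I_Q -> R)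
  (A : nat -> 'I_Q -> R) (Abar : 'I_Q -> R) (rho : 'I_Q -> R)
  (sched : nat -> 'I_N) (X : nat -> 'I_Q -> R) :
  (0 < N)%N ->
  (forall n q, 0 <= S n q) ->
  (forall q, 0 < delta q) ->
  (forall t q, 0 <= A t q <= Abar q) ->
  (forall q, 0 < rho q) ->
  (forall q, (fun t : nat => (t%:R)^-1 * \sum_(s < t) A s q) @ \oo --> rho q) ->
  ~ stab_region S rho ->
  maxweight_system S delta A sched X ->
  exists eta : 'I_Q -> R,
    (forall q, (fun t : nat => X t q / t%:R) @ \oo --> eta q) /\
    eta \in Psi rho S /\
    (forall eta', eta' \in Psi rho S ->
       dinner delta eta eta <= dinner delta eta' eta') /\
    (forall eta', eta' \in Psi rho S ->
       dinner delta eta' eta' = dinner delta eta eta -> eta' = eta).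
Proof.
move=> N0 S0 d0 A0 rho0 Ahyp _ sys.
have [a fa amin] := exists_min S delta rho.
exists (etaof S rho a); split.
  by move=> q; exact: (conv S0 d0 A0 sys fa amin Ahyp).
split.
  by rewrite inE; exists a; case: fa => a0 a1; split => //.
split.
  move=> eta'; rewrite inE => -[b [b0 [b1 ->]]].
  by have := amin b (conj b0 b1).
move=> eta'; rewrite inE => -[b [b0 [b1 ->]]] e.
exact: (unique_min d0 fa amin (conj b0 b1) e).
Qed.
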